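(* For all $A,B\in\mathrm{SL}(2,\mathbb Z)$, $c(AB)\le c(A)+c(B)$ and $c(AB)\equiv c(A)+c(B)\pmod 2$.
   Context: Admissible hexagons are the sets $\{\pm a,\pm b,\pm(a+b)\}\subset\mathbb Z^2$ with $(a,b)$ a basis of $\mathbb Z^2$ (they correspond to isotopy classes of $\theta$-curves in $T^2$). $\Gamma$ is the graph whose vertices are admissible hexagons, two being adjacent iff they share two opposite pairs of vertices $\pm\sigma,\pm\mu$ (this corresponds to a flip of a $\theta$-curve); $\Gamma$ is a trivalent tree, $d$ its graph distance, and $\mathrm{SL}(2,\mathbb Z)$ acts on it by isometries. With $W_0=\{\pm(1,0),\pm(0,1),\pm(1,-1)\}$, $c(A)=d(W_0,AW_0)$. *)

(* Defs.v *)
From HB Require Import structures.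
From mathcomp Require Import all_boot all_order all_algebra.
From mathcomp Require Import finmap.
From Stdlib Require Import ClassicalEpsilon.
Set Implicit Arguments. Unset Strict Implicit. Unset Printing Implicit Defensive.
Import Order.TTheory GRing.Theory Num.Theory.
Local Open Scope ring_scope.


Notation vec := ('cV[int]_2).

Definition vec2 (x y : int) : vec := \col_(i < 2) (if i == ord0 then x else y).

Definition cols2 (a b : vec) : 'M[int]_2 :=
  \matrix_(i < 2, j < 2) (if j == ord0 then a i ord0 else b i ord0).
Definition is_basis (a b : vec) : bool :=
  (\det (cols2 a b) == 1) || (\det (cols2 a b) == -1).

(* Vertices of Gamma: finite sets of vectors (hexagons). *)
Definition hexagon := {fset vec}.

Definition hex_list (a b : vec) : seq vec := [:: a; - a; b; - b; a + b; - (a + b)].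
Definition hex_of (a b : vec) : hexagon := [fset x | x in hex_list a b]%fset.

Definition admissible (H : hexagon) : Prop :=
  exists a b : vec, is_basis a b /\ H = hex_of a b.

Definition adjacent (H1 H2 : hexagon) : Prop :=
  [/\ admissible H1, admissible H2, H1 <> H2 &
   exists sigma mu : vec,
     [/\ sigma <> mu, sigma <> - mu,
         [/\ sigma \in H1, - sigma \in H1, mu \in H1 & - mu \in H1] &
         [/\ sigma \in H2, - sigma \in H2, mu \in H2 & - mu \in H2]]].

Inductive walk : nat -> hexagon -> hexagon -> Prop :=
| walk0 H : walk 0 H H
| walkS n H1 H2 H3 : adjacent H1 H2 -> walk n H2 H3 -> walk n.+1 H1 H3.

Definition is_dist (H1 H2 : hexagon) (n : nat) : Prop :=
  walk n H1 H2 /\ forall m, walk m H1 H2 -> (n <= m)%N.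

(* graph distance (Gamma is connected, so this is the genuine distance) *)
Definition dist (H1 H2 : hexagon) : nat :=
  epsilon (inhabits 0%N) (is_dist H1 H2).

Definition W0_list : seq vec :=
  [:: vec2 1 0; - vec2 1 0; vec2 0 1; - vec2 0 1; vec2 1 (-1); - vec2 1 (-1)].
Definition W0 : hexagon := [fset x | x in W0_list]%fset.

Definition act (A : 'M[int]_2) (H : hexagon) : hexagon :=
  [fset A *m v | v in H]%fset.

Definition c (A : 'M[int]_2) : nat := dist W0 (act A W0).

(* Main.v *)
Require Import Defs.
From HB Require Import structures.
From mathcomp Require Import all_boot all_order all_algebra.
From mathcomp Require Import finmap zify ring lra.
From Stdlib Require Import ClassicalEpsilon.
Set Implicit Arguments. Unset Strict Implicit. Unset Printing Implicit Defensive.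
Import Order.TTheory GRing.Theory Num.Theory.
Local Open Scope ring_scope.

Definition i1 : 'I_2 := @Ordinal 2 1 isT.

Lemma ord2_cases (i : 'I_2) : i = ord0 \/ i = i1.
Proof. case: i => [[|[|k]] Hi]; [left|right|by []]; exact: val_inj. Qed.

Lemma vec_eqP (u v : vec) : u = v <-> u 0 0 = v 0 0 /\ u i1 0 = v i1 0.
Proof.
split=> [->//|[h0 h1]]; apply/matrixP => i j.
rewrite (ord1 j); case: (ord2_cases i) => ->; by [].
Qed.

Lemma mem_hex v a b : (v \in hex_of a b) = (v \in hex_list a b).
Proof. by rewrite /hex_of in_fset. Qed.

Lemma mem_hexP v a b : v \in hex_of a b <->
  v = a \/ v = - a \/ v = b \/ v = - b \/ v = a + b \/ v = - (a + b).
Proof.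
rewrite mem_hex /hex_list !inE; split.
  move=> H; repeat (case/orP: H => [/eqP->|H]; first tauto); move/eqP: H => ->; tauto.
by case=> [->|[->|[->|[->|[->|->]]]]]; rewrite eqxx ?orbT.
Qed.

Definition cross (u v : vec) : int := u 0 0 * v i1 0 - u i1 0 * v 0 0.

Lemma crossDl u w v : cross (u + w) v = cross u v + cross w v.
Proof. rewrite /cross !mxE; ring. Qed.
Lemma crossDr u w v : cross v (u + w) = cross v u + cross v w.
Proof. rewrite /cross !mxE; ring. Qed.
Lemma crossNl u v : cross (- u) v = - cross u v.
Proof. rewrite /cross !mxE; ring. Qed.
Lemma crossNr u v : cross u (- v) = - cross u v.
Proof. rewrite /cross !mxE; ring. Qed.
Lemma crossxx u : cross u u = 0.
Proof. rewrite /cross; ring. Qed.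
Lemma crossC u v : cross v u = - cross u v.
Proof. rewrite /cross; ring. Qed.

Lemma det_cols2 a b : \det (cols2 a b) = cross a b.
Proof.
rewrite (expand_det_row _ ord0) !big_ord_recl big_ord0 /cofactor !det_mx11 /cols2 !mxE /=.
have -> : lift ord0 (0:'I_1) = i1 by apply: val_inj.
rewrite /cross /= expr0 expr1; ring.
Qed.

Definition par (x : int) : bool := ~~ (2 %| x)%Z.
Lemma parD x y : par (x + y) = par x (+) par y.
Proof.
rewrite /par; case: (boolP (2 %| x)%Z) => hx; case: (boolP (2 %| y)%Z) => hy /=;
 apply/negP/negP; lia.
Qed.
Lemma parN x : par (- x) = par x.
Proof. by rewrite /par dvdzE abszN. Qed.
Lemma parM x y : par (x * y) = par x && par y.
Proof. by rewrite /par !dvdzE abszM Euclid_dvdM // negb_or. Qed.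
Lemma par1 : par 1 = true. Proof. by []. Qed.
Lemma par0 : par 0 = false. Proof. by []. Qed.

Lemma det2 (A : 'M[int]_2) : \det A = A 0 0 * A i1 i1 - A 0 i1 * A i1 0.
Proof.
rewrite (expand_det_row _ ord0) !big_ord_recl big_ord0 /cofactor !det_mx11 /=.
rewrite !mxE /=.
have -> : lift ord0 (0:'I_1) = i1 by apply: val_inj.
rewrite /= expr0 expr1 /bump /=.
have -> : lift i1 (0:'I_1) = 0 by apply: val_inj.
ring.
Qed.

Lemma mulmx_entry (A : 'M[int]_2) (v : vec) i :
  (A *m v) i 0 = A i 0 * v 0 0 + A i i1 * v i1 0.
Proof.
rewrite mxE !big_ord_recl big_ord0 addr0.
by have -> : lift ord0 (ord0:'I_1) = i1 by apply: val_inj.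
Qed.

Lemma cross_mul (A : 'M[int]_2) u v : cross (A *m u) (A *m v) = \det A * cross u v.
Proof. rewrite /cross det2 !mulmx_entry; ring. Qed.

Lemma is_basisE a b : is_basis a b = (cross a b == 1) || (cross a b == -1).
Proof. by rewrite /is_basis det_cols2. Qed.

Lemma mem_actP (A : 'M[int]_2) (H : hexagon) v :
  reflect (exists2 w, w \in H & v = A *m w) (v \in act A H).
Proof. exact: imfsetP. Qed.

Lemma mem_act (A : 'M[int]_2) (H : hexagon) w : w \in H -> A *m w \in act A H.
Proof. by move=> h; apply/mem_actP; exists w. Qed.

Lemma act_hex A a b : act A (hex_of a b) = hex_of (A *m a) (A *m b).
Proof.
apply/fsetP => v; apply/mem_actP/idP.
  move=> [w /mem_hexP hw ->]; apply/mem_hexP.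
  by case: hw => [->|[->|[->|[->|[->|->]]]]]; rewrite ?mulmxN ?mulmxDr; tauto.
move/mem_hexP.
by rewrite -!mulmxN -mulmxDr -mulmxN => -[->|[->|[->|[->|[->|->]]]]];
  (eexists; last reflexivity); apply/mem_hexP; tauto.
Qed.

Lemma act_mul A B H : act (A *m B) H = act A (act B H).
Proof.
apply/fsetP => v; apply/mem_actP/mem_actP.
  by move=> [w hw ->]; exists (B *m w); [exact: mem_act| rewrite mulmxA].
by move=> [w /mem_actP [u hu ->] ->]; exists u; rewrite ?mulmxA.
Qed.

Lemma act1 H : act 1%:M H = H.
Proof.
apply/fsetP => v; apply/mem_actP/idP.
  by move=> [w hw ->]; rewrite mul1mx.
by move=> hv; exists v; rewrite ?mul1mx.
Qed.

Lemma act_adj A H : \det A = 1 -> act (\adj A) (act A H) = H.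
Proof. by move=> hA; rewrite -act_mul mul_adj_mx hA act1. Qed.

Lemma act_inj A H1 H2 : \det A = 1 -> act A H1 = act A H2 -> H1 = H2.
Proof. by move=> hA e; rewrite -(act_adj H1 hA) e act_adj. Qed.

Lemma mulmx_inj (A : 'M[int]_2) (u v : vec) : \det A = 1 -> A *m u = A *m v -> u = v.
Proof.
move=> hA e; have := congr1 (mulmx (\adj A)) e.
by rewrite !mulmxA mul_adj_mx hA !mul1mx.
Qed.

Lemma admissible_act A H : \det A = 1 -> admissible H -> admissible (act A H).
Proof.
move=> hA [a [b [hb ->]]]; exists (A *m a), (A *m b); split; last exact: act_hex.
by rewrite is_basisE cross_mul hA mul1r -is_basisE.
Qed.

Lemma adjacent_act A H1 H2 : \det A = 1 -> adjacent H1 H2 -> adjacent (act A H1) (act A H2).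
Proof.
move=> hA [a1 a2 ne [s [m [nsm nsm' [h1 h2 h3 h4] [h5 h6 h7 h8]]]]].
split; try exact: admissible_act.
  by move=> e; apply: ne; exact: act_inj e.
exists (A *m s), (A *m m); split.
- by move=> e; apply: nsm; exact: mulmx_inj e.
- by rewrite -mulmxN => e; apply: nsm'; exact: mulmx_inj e.
- by split; rewrite -?mulmxN; apply: mem_act.
- by split; rewrite -?mulmxN; apply: mem_act.
Qed.

Lemma walk_act A n H1 H2 : \det A = 1 -> walk n H1 H2 -> walk n (act A H1) (act A H2).
Proof.
move=> hA; elim => [H|k K1 K2 K3 adj w IH]; first exact: walk0.
by apply: walkS (adjacent_act hA adj) IH.
Qed.

Lemma walk_cat n m H1 H2 H3 : walk n H1 H2 -> walk m H2 H3 -> walk (n + m) H1 H3.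
Proof.
elim => [H|k K1 K2 K3 adj w IH] w2 //.
by rewrite addSn; apply: walkS adj (IH w2).
Qed.

Lemma walk_snoc n H1 H2 H3 : walk n H1 H2 -> adjacent H2 H3 -> walk n.+1 H1 H3.
Proof.
move=> w adj; rewrite -addn1; apply: walk_cat w _.
by apply: walkS adj (walk0 _).
Qed.

Lemma min_exists (P : nat -> Prop) : (exists n, P n) -> exists n, P n /\ forall m, P m -> (n <= m)%N.
Proof.
move=> [n Pn]; elim: n {-2}n (leqnn n) Pn => [|N IH] n hn Pn.
  by exists n; split => // m _; move: hn; rewrite leqn0 => /eqP ->.
case: (classic (exists m, (m < n)%N /\ P m)) => [[m [hm Pm]]|nm].
  by apply: (IH m) => //; lia.
exists n; split => // m Pm; rewrite leqNgt; apply/negP => hm; apply: nm; by exists m.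
Qed.

Lemma dist_spec H1 H2 : (exists n, walk n H1 H2) -> is_dist H1 H2 (dist H1 H2).
Proof.
move=> ex; rewrite /dist; apply: epsilon_spec.
have [n [w hn]] := min_exists ex; by exists n.
Qed.

Lemma vec2_0 x y : vec2 x y 0 0 = x. Proof. by rewrite mxE. Qed.
Lemma vec2_1 x y : vec2 x y i1 0 = y. Proof. by rewrite mxE. Qed.
Lemma vec2_eta (v : vec) : v = vec2 (v 0 0) (v i1 0).
Proof. by apply/vec_eqP; rewrite vec2_0 vec2_1. Qed.
Lemma vec2_eq x y x' y' : (vec2 x y == vec2 x' y') = (x == x') && (y == y').
Proof.
apply/eqP/andP => [/vec_eqP|[/eqP -> /eqP ->]//].
by rewrite !vec2_0 !vec2_1 => -[-> ->].
Qed.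
Lemma vec2N x y : - vec2 x y = vec2 (- x) (- y).
Proof. by apply/vec_eqP; rewrite !mxE. Qed.
Lemma vec2D x y x' y' : vec2 x y + vec2 x' y' = vec2 (x + x') (y + y').
Proof. by apply/vec_eqP; rewrite !mxE. Qed.
Lemma cross2 x y x' y' : cross (vec2 x y) (vec2 x' y') = x * y' - y * x'.
Proof. by rewrite /cross !vec2_0 !vec2_1. Qed.

Lemma hexN v a b : v \in hex_of a b -> - v \in hex_of a b.
Proof. by move/mem_hexP => h; apply/mem_hexP; case: h => [->|[->|[->|[->|[->|->]]]]]; rewrite ?opprK; tauto. Qed.

Lemma hex_eq a b x y :
  a \in hex_of x y -> b \in hex_of x y -> a + b \in hex_of x y ->
  x \in hex_of a b -> y \in hex_of a b -> x + y \in hex_of a b ->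
  hex_of a b = hex_of x y.
Proof.
have sub : forall a b x y, a \in hex_of x y -> b \in hex_of x y -> a + b \in hex_of x y ->
   {subset hex_of a b <= hex_of x y}.
  move=> a' b' x' y' ha hb hab v /mem_hexP.
  by case=> [->|[->|[->|[->|[->|->]]]]]; rewrite ?hexN.
move=> ha hb hab hx hy hxy; apply/fsetP => v; apply/idP/idP; exact: sub.
Qed.

Ltac hex_solve :=
  apply: hex_eq; rewrite !mem_hex /hex_list !inE !(vec2N, vec2D) !vec2_eq; lia.


Definition cls (u v : vec) : bool :=
  (par (u 0 0) && par (v 0 0)) (+) (par (u i1 0) && par (v i1 0)) (+) (par (u 0 0) && par (v i1 0)).

Lemma cross_par a b : par (cross a b) = (par (a 0 0) && par (b i1 0)) (+) (par (a i1 0) && par (b 0 0)).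
Proof. by rewrite /cross parD parN !parM. Qed.

Ltac csimp := rewrite ?(crossDl, crossDr, crossNl, crossNr, crossxx).

Ltac cls_solve a b hc :=
  let hp := fresh "hp" in
  have hp := congr1 par hc; rewrite cross_par par1 in hp;
  rewrite /cls ?mxE ?parN ?parD ?parN;
  move: hp; move: (par (a 0 0)) (par (a i1 0)) (par (b 0 0)) (par (b i1 0)) => [] [] [] [] //=.

Lemma hex_in1 a b : a \in hex_of a b. Proof. by apply/mem_hexP; tauto. Qed.
Lemma hex_in2 a b : b \in hex_of a b. Proof. by apply/mem_hexP; tauto. Qed.
Lemma hex_in3 a b : a + b \in hex_of a b. Proof. by apply/mem_hexP; tauto. Qed.

Lemma cls_unique a b a' b' : cross a b = 1 -> cross a' b' = 1 ->
  hex_of a b = hex_of a' b' -> cls a b = cls a' b'.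
Proof.
move=> hc hc' e.
have ha : a' \in hex_of a b by rewrite e hex_in1.
have hb : b' \in hex_of a b by rewrite e hex_in2.
have hab : a' + b' \in hex_of a b by rewrite e hex_in3.
have cba := crossC a b.
case/mem_hexP: ha => [|[|[|[|[|]]]]] ?; subst a'; case/mem_hexP: hb => [|[|[|[|[|]]]]] ?; subst b';
 (try by move: hc'; csimp; rewrite ?cba; lia);
 (try by case/mem_hexP: hab => [|[|[|[|[|]]]]] E;
     have E1 := congr1 (cross a) E; have E2 := congr1 (cross^~ b) E; move: E1 E2 => /=; csimp; rewrite ?cba; lia);
 cls_solve a b hc.
Qed.

Lemma hex_swap a b : hex_of a b = hex_of b a.
Proof. by apply: hex_eq; rewrite ?hex_in1 ?hex_in2 // addrC hex_in3. Qed.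

Ltac hex_solve2 a b :=
  rewrite [a]vec2_eta [b]vec2_eta; hex_solve.

Lemma hex_two a b s m : is_basis a b -> s \in hex_of a b -> m \in hex_of a b -> s <> m -> s <> - m ->
  (hex_of a b = hex_of s m \/ hex_of a b = hex_of s (- m)) /\ (cross s m = 1 \/ cross s m = -1).
Proof.
rewrite is_basisE => /orP hb hs hm n1 n2.
have hc : cross a b = 1 \/ cross a b = -1 by case: hb => /eqP; tauto.
have cba := crossC a b.
case/mem_hexP: hs => [|[|[|[|[|]]]]] ?; subst s; case/mem_hexP: hm => [|[|[|[|[|]]]]] ?; subst m;
 try (exfalso; first [by apply: n1 | by apply: n2; rewrite ?opprK]);
 (split; [ first [left; hex_solve2 a b | right; hex_solve2 a b] | csimp; rewrite ?cba; lia ]).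
Qed.

Definition hcol (H : hexagon) : bool :=
  if excluded_middle_informative (exists a b, [/\ cross a b = 1, H = hex_of a b & cls a b])
  then true else false.

Lemma colP H : hcol H <-> exists a b, [/\ cross a b = 1, H = hex_of a b & cls a b].
Proof. rewrite /hcol; case: excluded_middle_informative => h; by split. Qed.

Lemma colE a b : cross a b = 1 -> hcol (hex_of a b) = cls a b.
Proof.
move=> hc; apply/idP/idP.
  by case/colP => a' [b' [hc' e hcl]]; rewrite (cls_unique hc hc' e).
by move=> h; apply/colP; exists a, b.
Qed.

Lemma colE' a b : cross a b = -1 -> hcol (hex_of a b) = cls b a.
Proof. by move=> hc; rewrite hex_swap colE // crossC hc opprK. Qed.

Lemma cls_swapN u v : cross u v = 1 -> cls u v = ~~ cls (- v) u.
Proof. move=> hc; cls_solve u v hc. Qed.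
Lemma cls_swapN' u v : cross u v = 1 -> cls u v = ~~ cls v (- u).
Proof. move=> hc; cls_solve u v hc. Qed.

Lemma col_flip s m : cross s m = 1 \/ cross s m = -1 ->
  hcol (hex_of s (- m)) = ~~ hcol (hex_of s m).
Proof.
case=> hc.
  have hn : cross s (- m) = -1 by rewrite crossNr hc.
  by rewrite (colE hc) (colE' hn) (cls_swapN hc) negbK.
have hn : cross s (- m) = 1 by rewrite crossNr hc opprK.
rewrite (colE' hc) (colE hn).
have hc' : cross m s = 1 by rewrite crossC hc opprK.
by rewrite (cls_swapN' hc') negbK.
Qed.

Lemma adj_col H1 H2 : adjacent H1 H2 -> hcol H2 = ~~ hcol H1.
Proof.
move=> [[a [b [hb e1]]] [a' [b' [hb' e2]]] ne [s [m [n1 n2 [h1 _ h3 _] [h5 _ h7 _]]]]].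
subst H1 H2.
have [[e1|e1] hc] := hex_two hb h1 h3 n1 n2;
have [[e2|e2] _] := hex_two hb' h5 h7 n1 n2; rewrite e1 e2 in ne *.
- by case: ne.
- by rewrite col_flip.
- by rewrite col_flip // negbK.
- by case: ne.
Qed.

Lemma walk_col n H1 H2 : walk n H1 H2 -> hcol H2 = hcol H1 (+) odd n.
Proof.
elim => [H|k K1 K2 K3 adj w IH]; first by rewrite addbF.
by rewrite IH (adj_col adj) /=; case: (hcol K1); case: (odd k).
Qed.

Lemma unit_int (x y : int) : x * y = 1 \/ x * y = -1 -> x = 1 \/ x = -1.
Proof.
move=> h; have : (absz (x * y)%R = 1)%N by case: h => ->.
rewrite abszM => /eqP; rewrite muln_eq1 => /andP[/eqP hx _]; lia.
Qed.

Definition M22 (p q r s : int) : 'M[int]_2 :=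
  \matrix_(i < 2, j < 2) (if i == ord0 then (if j == ord0 then p else q) else (if j == ord0 then r else s)).

Lemma M22_vec2 p q r s x y : M22 p q r s *m vec2 x y = vec2 (p * x + q * y) (r * x + s * y).
Proof. by apply/vec_eqP; rewrite !mulmx_entry !mxE. Qed.

Lemma M22_det p q r s : \det (M22 p q r s) = p * s - q * r.
Proof. by rewrite det2 !mxE. Qed.

Lemma M22_1 : M22 1 0 0 1 = 1%:M.
Proof.
apply/matrixP => i j; rewrite !mxE.
by case: (ord2_cases i) => ->; case: (ord2_cases j) => ->.
Qed.

Lemma M22_eta (A : 'M[int]_2) : A = M22 (A 0 0) (A 0 i1) (A i1 0) (A i1 i1).
Proof.
apply/matrixP => i j; rewrite !mxE.
by case: (ord2_cases i) => ->; case: (ord2_cases j) => ->.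
Qed.

Lemma M22_mul p q r s p' q' r' s' :
  M22 p q r s *m M22 p' q' r' s' =
  M22 (p * p' + q * r') (p * q' + q * s') (r * p' + s * r') (r * q' + s * s').
Proof.
apply/matrixP => i j; rewrite mxE !big_ord_recl big_ord0 !mxE.
have -> : lift ord0 (ord0:'I_1) = i1 by apply: val_inj.
by case: (ord2_cases i) => ->; case: (ord2_cases j) => ->; rewrite /= addr0.
Qed.

Lemma W0E : W0 = hex_of (vec2 1 (-1)) (vec2 0 1).
Proof.
apply/fsetP => v; rewrite /W0 in_fset mem_hex /W0_list /hex_list.
rewrite [v]vec2_eta !inE !(vec2N, vec2D) !vec2_eq.
lia.
Qed.

Lemma adj_hex a b a' b' s m w :
  is_basis a b -> is_basis a' b' -> w \in hex_of a' b' -> w \notin hex_of a b ->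
  s != m -> s != - m ->
  [&& s \in hex_of a b, - s \in hex_of a b, m \in hex_of a b & - m \in hex_of a b] ->
  [&& s \in hex_of a' b', - s \in hex_of a' b', m \in hex_of a' b' & - m \in hex_of a' b'] ->
  adjacent (hex_of a b) (hex_of a' b').
Proof.
move=> hb hb' hw hw' n1 n2 /and4P[h1 h2 h3 h4] /and4P[h5 h6 h7 h8]; split.
- by exists a, b.
- by exists a', b'.
- by move=> e; move: hw'; rewrite e hw.
- by exists s, m; split; [apply/eqP|apply/eqP|split|split].
Qed.

Ltac conc := rewrite ?is_basisE ?cross2 ?mem_hex /hex_list ?inE ?(vec2N, vec2D) ?vec2_eq.

Definition T := M22 1 1 0 1.
Definition Ti := M22 1 (-1) 0 1.
Definition L := M22 1 0 1 1.
Definition Li := M22 1 0 (-1) 1.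

Lemma adjT : adjacent W0 (act T W0).
Proof.
rewrite W0E act_hex !M22_vec2.
apply: (@adj_hex _ _ _ _ (vec2 1 0) (vec2 0 1) (vec2 1 1)); conc; by [].
Qed.
Lemma adjTi : adjacent W0 (act Ti W0).
Proof.
rewrite W0E act_hex !M22_vec2.
apply: (@adj_hex _ _ _ _ (vec2 1 0) (vec2 1 (-1)) (vec2 2 (-1))); conc; by [].
Qed.
Lemma adjL : adjacent W0 (act L W0).
Proof.
rewrite W0E act_hex !M22_vec2.
apply: (@adj_hex _ _ _ _ (vec2 1 0) (vec2 0 1) (vec2 1 1)); conc; by [].
Qed.
Lemma adjLi : adjacent W0 (act Li W0).
Proof.
rewrite W0E act_hex !M22_vec2.
apply: (@adj_hex _ _ _ _ (vec2 0 1) (vec2 1 (-1)) (vec2 1 (-2))); conc; by [].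
Qed.

Definition Pm p q r s := exists n, walk n W0 (act (M22 p q r s) W0).

Lemma step_gen p q r s g : p * s - q * r = 1 -> adjacent W0 (act g W0) -> Pm p q r s ->
  exists n, walk n W0 (act (M22 p q r s *m g) W0).
Proof.
move=> hd adj [n w]; exists n.+1; rewrite act_mul; apply: walk_snoc w _.
by apply: adjacent_act => //; rewrite M22_det.
Qed.

Lemma sT p q r s p' q' r' s' : p * s - q * r = 1 -> Pm p q r s ->
  p' = p -> q' = p + q -> r' = r -> s' = r + s -> Pm p' q' r' s'.
Proof.
move=> hd hP -> -> -> ->; have := step_gen hd adjT hP.
have E : M22 p q r s *m T = M22 p (p + q) r (r + s) by rewrite /T M22_mul; f_equal; ring.
by rewrite E.
Qed.
Lemma sTi p q r s p' q' r' s' : p * s - q * r = 1 -> Pm p q r s ->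
  p' = p -> q' = q - p -> r' = r -> s' = s - r -> Pm p' q' r' s'.
Proof.
move=> hd hP -> -> -> ->; have := step_gen hd adjTi hP.
have E : M22 p q r s *m Ti = M22 p (q - p) r (s - r) by rewrite /Ti M22_mul; f_equal; ring.
by rewrite E.
Qed.
Lemma sL p q r s p' q' r' s' : p * s - q * r = 1 -> Pm p q r s ->
  p' = p + q -> q' = q -> r' = r + s -> s' = s -> Pm p' q' r' s'.
Proof.
move=> hd hP -> -> -> ->; have := step_gen hd adjL hP.
have E : M22 p q r s *m L = M22 (p + q) q (r + s) s by rewrite /L M22_mul; f_equal; ring.
by rewrite E.
Qed.
Lemma sLi p q r s p' q' r' s' : p * s - q * r = 1 -> Pm p q r s ->
  p' = p - q -> q' = q -> r' = r - s -> s' = s -> Pm p' q' r' s'.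
Proof.
move=> hd hP -> -> -> ->; have := step_gen hd adjLi hP.
have E : M22 p q r s *m Li = M22 (p - q) q (r - s) s by rewrite /Li M22_mul; f_equal; ring.
by rewrite E.
Qed.

Lemma sS p q r s : p * s - q * r = 1 -> Pm p q r s -> Pm q (- p) s (- r).
Proof.
move=> hd hP.
have h1 := sTi hd hP erefl erefl erefl erefl.
have hd1 : p * (s - r) - (q - p) * r = 1 by lia.
have h2 := sL hd1 h1 erefl erefl erefl erefl.
have hd2 : (p + (q - p)) * (s - r) - (q - p) * (r + (s - r)) = 1 by lia.
by apply: (sTi hd2 h2); ring.
Qed.

Lemma PI : Pm 1 0 0 1.
Proof. by exists 0%N; rewrite M22_1 act1; apply: walk0. Qed.
Lemma PS : Pm 0 (-1) 1 0.
Proof. by have := @sS 1 0 0 1 (erefl _) PI; rewrite oppr0. Qed.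
Lemma PmI : Pm (-1) 0 0 (-1).
Proof. by have := @sS 0 (-1) 1 0 (erefl _) PS; rewrite oppr0. Qed.
Lemma PmS : Pm 0 1 (-1) 0.
Proof. by have := @sS (-1) 0 0 (-1) (erefl _) PmI; rewrite oppr0 opprK. Qed.

Lemma inner1 K : forall r p, (absz r <= K)%N -> p = 1 \/ p = -1 -> Pm p 0 r p.
Proof.
elim: K => [|K IH] r p hr hp.
  have -> : r = 0 by lia.
  by case: hp => ->; [exact: PI|exact: PmI].
have [->|rnz] := eqVneq r 0; first by case: hp => ->; [exact: PI|exact: PmI].
case: hp => ->; case: (lerP 0 r) => hr0.
- by apply: (@sL 1 0 (r-1) 1); [lia | apply: IH; lia | lia..].
- by apply: (@sLi 1 0 (r+1) 1); [lia | apply: IH; lia | lia..].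
- by apply: (@sLi (-1) 0 (r-1) (-1)); [lia | apply: IH; lia | lia..].
- by apply: (@sL (-1) 0 (r+1) (-1)); [lia | apply: IH; lia | lia..].
Qed.

Lemma inner2 K : forall s q, (absz s <= K)%N -> q = 1 \/ q = -1 -> Pm 0 q (- q) s.
Proof.
elim: K => [|K IH] s q hs hq.
  have -> : s = 0 by lia.
  by case: hq => ->; [exact: PmS| rewrite opprK; exact: PS].
have [->|snz] := eqVneq s 0; first by case: hq => ->; [exact: PmS| rewrite opprK; exact: PS].
case: hq => ->; case: (lerP 0 s) => hs0.
- by apply: (@sTi 0 1 (-1) (s-1)); [lia | apply: IH; lia | lia..].
- by apply: (@sT 0 1 (-1) (s+1)); [lia | apply: IH; lia | lia..].
- by apply: (@sT 0 (-1) (- (-1)) (s-1)); [lia | apply: IH; lia | lia..].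
- by apply: (@sTi 0 (-1) (- (-1)) (s+1)); [lia | apply: IH; lia | lia..].
Qed.

Lemma outer N : forall p q r s, (absz p + absz q <= N)%N -> p * s - q * r = 1 -> Pm p q r s.
Proof.
elim: N => [|N IH] p q r s hN hd.
  have p0 : p = 0 by lia.
  have q0 : q = 0 by lia.
  by subst; move: hd; rewrite !mul0r subrr.
have [p0|pnz] := eqVneq p 0.
  subst p; move: hd; rewrite mul0r sub0r => hd.
  have [q1|q1] : q = 1 \/ q = -1 by apply: (@unit_int q r); lia.
    subst q; have -> : r = - 1 by lia.
    by apply: (inner2 (K := absz s)); lia.
  subst q; have -> : r = - (-1) by lia.
  by apply: (inner2 (K := absz s)); lia.
have [q0|qnz] := eqVneq q 0.
  subst q; move: hd; rewrite mul0r subr0 => hd.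
  have [p1|p1] : p = 1 \/ p = -1 by apply: (@unit_int p s); lia.
    subst p; have -> : s = 1 by lia.
    by apply: (inner1 (K := absz r)); lia.
  subst p; have -> : s = -1 by lia.
  by apply: (inner1 (K := absz r)); lia.
case: (lerP 0 p) => hp; case: (lerP 0 q) => hq; case: (leqP (absz q) (absz p)) => hpq.
all: first [ by apply: (@sL (p-q) q (r-s) s); [lia | apply: IH; lia | lia..]
      | by apply: (@sLi (p+q) q (r+s) s); [lia | apply: IH; lia | lia..]
      | by apply: (@sT p (q-p) r (s-r)); [lia | apply: IH; lia | lia..]
      | by apply: (@sTi p (q+p) r (s+r)); [lia | apply: IH; lia | lia..] ].
Qed.

Lemma conn (A : 'M[int]_2) : \det A = 1 -> exists n, walk n W0 (act A W0).
Proof.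
move=> hA; rewrite [A]M22_eta; apply: outer; first exact: leqnn.
by move: hA; rewrite det2.
Qed.

Theorem lemma1 (A B : 'M[int]_2) :
  \det A = 1 -> \det B = 1 ->
  (c (A *m B) <= c A + c B)%N /\ c (A *m B) = (c A + c B)%N %[mod 2].
Proof.
move=> hA hB.
have hAB : \det (A *m B) = 1 by rewrite det_mulmx hA hB mulr1.
have [wA _] := dist_spec (conn hA).
have [wB _] := dist_spec (conn hB).
have [wAB minAB] := dist_spec (conn hAB).
have w : walk (c A + c B) W0 (act (A *m B) W0).
  by rewrite act_mul; apply: walk_cat wA (walk_act hA wB).
split; first exact: minAB.
have e1 := walk_col wAB; have e2 := walk_col w.
rewrite e1 in e2; rewrite !modn2 /c; move: e2.
by case: (hcol W0); case: (odd _); case: (odd _).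
Qed.
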